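(* Let $p$ be a prime and let $Q\in\mathbb{Q}_p[X_1,\dots,X_n]$ be a nonsingular quadratic form which is isotropic over $\mathbb{Q}_p$. Then $R(Q(\mathbb{Z}_p^n))=\mathbb{Q}_p$. In particular, $R(Q(\mathbb{Z}^n))$ is dense in $\mathbb{Q}_p$.
   Context: A quadratic form $Q=\sum_{i,j}a_{ij}X_iX_j$ ($a_{ij}=a_{ji}$, not all zero) is nonsingular if $\det[a_{ij}]\neq 0$; it is isotropic over $\mathbb{Q}_p$ if $Q(\mathbf{x})=0$ for some nonzero $\mathbf{x}\in\mathbb{Q}_p^n$. $\mathbb{Z}_p$ denotes the $p$-adic integers. For a subset $A$ of a field, $R(A)=\{a/b: a,b\in A,\ b\neq 0\}$. For $S\subseteq\mathbb{Q}_p^n$, $Q(S)=\{Q(\mathbf{x}):\mathbf{x}\in S\}$. *)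

(* Defs.v *)
From mathcomp Require Import all_boot all_order all_algebra.
Set Implicit Arguments. Unset Strict Implicit. Unset Printing Implicit Defensive.
Import Order.TTheory GRing.Theory Num.Theory.
Local Open Scope ring_scope.

Section Padic.
Variables (K : fieldType) (v : K -> int).

(* x and y are congruent modulo p^k (v x-y >= k, with v(0) = +oo) *)
Definition vclose (k : int) (x y : K) : Prop := x = y \/ (x != y /\ k <= v (x - y)).

Definition vint (x : K) : Prop := x = 0 \/ 0 <= v x.

Definition vcauchy (u : nat -> K) : Prop :=
  forall k : int, exists N : nat, forall m n, (N <= m)%N -> (N <= n)%N -> vclose k (u m) (u n).

Definition vconverges (u : nat -> K) (l : K) : Prop :=
  forall k : int, exists N : nat, forall n, (N <= n)%N -> vclose k (u n) l.

(* (K, v) is (a copy of) the field Q_p of p-adic numbers: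
   a discrete valuation, p is a uniformizer, every integer is congruent
   modulo p to a digit 0..p-1 (residue field F_p), and K is complete. *)
Definition is_Qp (p : nat) : Prop :=
  [/\ forall x y, x != 0 -> y != 0 -> v (x * y) = v x + v y,
      forall x y, x != 0 -> y != 0 -> x + y != 0 -> Num.min (v x) (v y) <= v (x + y),
      p%:R != 0 :> K /\ v p%:R = 1,
      forall x, vint x -> exists2 d : nat, (d < p)%N & vclose 1 x d%:R
    & forall u, vcauchy u -> exists l, vconverges u l].

Definition qform (n : nat) (a : 'M[K]_n) (x : 'I_n -> K) : K :=
  \sum_(i < n) \sum_(j < n) a i j * x i * x j.

Definition ratios (A : K -> Prop) : K -> Prop :=
  fun z => exists a b, [/\ A a, A b, b != 0 & z = a / b].

Definition qimage (n : nat) (a : 'M[K]_n) (S : ('I_n -> K) -> Prop) : K -> Prop :=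
  fun c => exists x, S x /\ c = qform a x.

Definition dense_v (D : K -> Prop) : Prop :=
  forall z : K, forall k : int, exists w, D w /\ vclose k z w.

End Padic.

(* Main.v *)
Require Import Defs.
From mathcomp Require Import all_boot all_order all_algebra.
From mathcomp Require Import zify ring lra.
Import Order.TTheory GRing.Theory Num.Theory.
Set Implicit Arguments. Unset Strict Implicit.
Local Open Scope ring_scope.

Definition ge (K : fieldType) (v : K -> int) (k : int) (x : K) : Prop := x = 0 \/ k <= v x.

Lemma v1 (K : fieldType) (v : K -> int) p : is_Qp v p -> v 1 = 0.
Proof.
case=> vM _ _ _ _; have := vM 1 1 (oner_neq0 K) (oner_neq0 K); rewrite mulr1; lia.
Qed.

Lemma vN1 (K : fieldType) (v : K -> int) p : is_Qp v p -> v (-1) = 0.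
Proof.
move=> H; have h1 := v1 H; case: H => vM _ _ _ _.
have n1 : (-1 : K) != 0 by rewrite oppr_eq0 oner_neq0.
have := vM _ _ n1 n1; rewrite mulrNN mulr1 h1; lia.
Qed.

Lemma vN (K : fieldType) (v : K -> int) p x : is_Qp v p -> x != 0 -> v (- x) = v x.
Proof.
move=> H xn; have h1 := vN1 H; case: H => vM _ _ _ _.
have n1 : (-1 : K) != 0 by rewrite oppr_eq0 oner_neq0.
by rewrite -mulN1r vM // h1 add0r.
Qed.

Lemma vV (K : fieldType) (v : K -> int) p x : is_Qp v p -> x != 0 -> v (x^-1) = - v x.
Proof.
move=> H xn; have h1 := v1 H; case: H => vM _ _ _ _.
have := vM _ _ xn (invr_neq0 xn); rewrite mulfV // h1; lia.
Qed.

Lemma ge0 (K : fieldType) (v : K -> int) k : ge v k 0.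
Proof. by left. Qed.

Lemma geW (K : fieldType) (v : K -> int) k l x : l <= k -> ge v k x -> ge v l x.
Proof. move=> hl [->|h]; [by left | right; lia]. Qed.

Lemma geD (K : fieldType) (v : K -> int) p k x y : is_Qp v p ->
  ge v k x -> ge v k y -> ge v k (x + y).
Proof.
case=> _ vU _ _ _ [->|hx]; first by rewrite add0r.
case=> [->|hy]; first by rewrite addr0; right.
have [x0|xn] := eqVneq x 0; first by rewrite x0 add0r; right.
have [y0|yn] := eqVneq y 0; first by rewrite y0 addr0; right.
have [s0|sn] := eqVneq (x + y) 0; first by left.
right; have := vU _ _ xn yn sn; rewrite ge_min => /orP[] h; [exact: le_trans hx h | exact: le_trans hy h].
Qed.

Lemma geN (K : fieldType) (v : K -> int) p k x : is_Qp v p -> ge v k x -> ge v k (- x).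
Proof.
move=> H [->|h]; first by rewrite oppr0; left.
have [x0|xn] := eqVneq x 0; first by rewrite x0 oppr0; left.
by right; rewrite (vN H xn).
Qed.

Lemma geB (K : fieldType) (v : K -> int) p k x y : is_Qp v p ->
  ge v k x -> ge v k y -> ge v k (x - y).
Proof. by move=> H hx hy; apply: (geD H hx (geN H hy)). Qed.

Lemma geM (K : fieldType) (v : K -> int) p k l x y : is_Qp v p ->
  ge v k x -> ge v l y -> ge v (k + l) (x * y).
Proof.
case=> vM _ _ _ _.
have [->|xn] := eqVneq x 0; first by rewrite mul0r; left.
have [->|yn] := eqVneq y 0; first by rewrite mulr0; left.
case=> [/eqP|hx]; first by rewrite (negbTE xn).
case=> [/eqP|hy]; first by rewrite (negbTE yn).
right; rewrite vM //; lia.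
Qed.

Lemma geV (K : fieldType) (v : K -> int) p k x u : is_Qp v p -> u != 0 ->
  ge v k x -> ge v (k - v u) (x / u).
Proof.
move=> H un hx; apply: (geM H hx); right; rewrite (vV H un); lia.
Qed.

Lemma ge_sum (K : fieldType) (v : K -> int) p k (I : finType) (F : I -> K) :
  is_Qp v p -> (forall i, ge v k (F i)) -> ge v k (\sum_i F i).
Proof.
move=> H hF; apply: (big_ind (ge v k)); [exact: ge0 | |].
  by move=> x y; exact: geD H.
by move=> i _; apply: hF.
Qed.

Lemma ge_same (K : fieldType) (v : K -> int) p x y : is_Qp v p -> y != 0 ->
  ge v (v y + 1) (x - y) -> x != 0 /\ v x = v y.
Proof.
move=> H yn h.
have [e|en] := eqVneq (x - y) 0.
  by move/eqP: e; rewrite subr_eq0 => /eqP ->.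
case: h => [/eqP|h]; first by rewrite (negbTE en).
have [x0|xn] := eqVneq x 0.
  by move: h; rewrite x0 sub0r (vN H yn); lia.
split=> //.
have vxy := vN H en.
case: H => _ vU _ _ _.
have hxy : x = y + (x - y) by rewrite addrC subrK.
have := vU y (x - y) yn en; rewrite -hxy => /(_ xn); rewrite ge_min => h1.
have e2 : x + - (x - y) = y by rewrite opprB addrC subrK.
have := vU x (- (x - y)) xn; rewrite oppr_eq0 e2 vxy => /(_ en yn); rewrite ge_min => h2.
move: h1 h2 => /orP[] h1 /orP[] h2; lia.
Qed.

Lemma vpow (K : fieldType) (v : K -> int) p m : is_Qp v p ->
  p%:R ^+ m != 0 :> K /\ v (p%:R ^+ m) = m.
Proof.
move=> H; have h1 := v1 H; case: H => vM _ [pn vp] _ _.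
elim: m => [|m [IHn IHv]]; first by rewrite expr0 oner_neq0 h1.
rewrite exprS mulf_neq0 // vM // vp IHv; split=> //; lia.
Qed.

Lemma approx (K : fieldType) (v : K -> int) p (N : nat) x : is_Qp v p ->
  ge v 0 x -> exists m : int, ge v N (x - m%:~R).
Proof.
move=> H; elim: N x => [|N IH] x hx; first by exists 0; rewrite subr0.
have H' := H; case: H' => _ _ [pn vp] dig _.
have [d _ hd] := dig x hx.
have hd' : ge v 1 (x - d%:R).
  case: hd => [->|[_ h]]; [by rewrite subrr; left | by right].
have := geV H pn hd'; rewrite vp subrr => /IH [m1 hm1].
exists (d%:Z + p%:Z * m1).
have -> : x - (d%:Z + p%:Z * m1)%:~R = p%:R * ((x - d%:R) / p%:R - m1%:~R).
  by rewrite intrD intrM /=; field.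
have hp : ge v 1 (p%:R : K) by right; rewrite vp.
apply: geW (geM H hp hm1); lia.
Qed.

Lemma bound (I : finType) (f : I -> int) : exists M : nat, forall i, f i <= M.
Proof.
exists (\sum_i `|f i|)%N => i.
have : (`|f i| <= \sum_i `|f i|)%N by rewrite (bigD1 i) //= leq_addr.
lia.
Qed.

Lemma two_nz (K : fieldType) (v : K -> int) p : prime p -> is_Qp v p -> 2%:R != 0 :> K.
Proof.
move=> pp H; have h1 := v1 H; case: H => _ _ [pn vp] _ _.
case: (even_prime pp) => [e|op]; first by rewrite -e.
apply/negP => /eqP h2.
have : p%:R = 1 :> K.
  rewrite {1}(divn_eq p 2) natrD natrM h2 mulr0 add0r modn2 op //.
by move=> e; move: vp; rewrite e h1.
Qed.

Definition bil (K : fieldType) n (a : 'M[K]_n) (x y : 'I_n -> K) :=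
  \sum_i \sum_j a i j * x i * y j.

Lemma qform_lin (K : fieldType) n (a : 'M[K]_n) t x y :
  qform a (fun i => t * x i + y i) =
  t ^+ 2 * qform a x + t * (bil a x y + bil a y x) + qform a y.
Proof.
rewrite /qform /bil mulrDr !mulr_sumr -!big_split; apply: eq_bigr => i _.
rewrite !mulr_sumr -!big_split; apply: eq_bigr => j _ /=; ring.
Qed.

Lemma qformZ (K : fieldType) n (a : 'M[K]_n) t x :
  qform a (fun i => t * x i) = t ^+ 2 * qform a x.
Proof.
rewrite /qform !mulr_sumr; apply: eq_bigr => i _.
rewrite !mulr_sumr; apply: eq_bigr => j _ /=; ring.
Qed.

Lemma bil_sym (K : fieldType) n (a : 'M[K]_n) x y : a^T = a -> bil a y x = bil a x y.
Proof.
move=> hs; rewrite /bil exchange_big; apply: eq_bigr => i _; apply: eq_bigr => j _.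
have -> : a j i = a i j by rewrite -{1}hs mxE.
ring.
Qed.

Lemma universal (K : fieldType) n (a : 'M[K]_n) : 2%:R != 0 :> K ->
  a^T = a -> \det a != 0 ->
  (exists x : 'I_n -> K, (exists i, x i != 0) /\ qform a x = 0) ->
  forall z, exists y, qform a y = z.
Proof.
move=> h2 hs hdet [x [[i0 hi0] hq]] z.
pose u : 'rV[K]_n := \row_i x i.
have un : u != 0.
  apply/negP => /eqP hu; move: hi0; have := congr1 (fun M : 'rV[K]_n => M 0 i0) hu.
  by rewrite /= !mxE => ->; rewrite eqxx.
have uan : u *m a != 0.
  apply/negP => /eqP hua; move: hdet; case: det0P => //; case.
  by exists u.
have [/existsP [j0 hj0] | hn] := boolP [exists j, (u *m a) 0 j != 0]; last first.
  move: uan; rewrite negb_exists in hn; move/forallP: hn => hn.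
  suff -> : u *m a = 0 by rewrite eqxx.
  apply/matrixP => i j; rewrite (ord1 i) [RHS]mxE.
  by have := hn j; rewrite negbK => /eqP.
pose e := fun j : 'I_n => (j == j0)%:R : K.
have hb : bil a x e = (u *m a) 0 j0.
  rewrite /bil mxE; apply: eq_bigr => i _.
  rewrite (bigD1 j0) //= big1 ?addr0; last first.
    by move=> j /negbTE hj; rewrite /e hj mulr0.
  by rewrite /e eqxx mxE mulr1 mulrC.
set b := (u *m a) 0 j0 in hj0 hb.
exists (fun i => (z - qform a e) / (2%:R * b) * x i + e i).
rewrite qform_lin hq (bil_sym x e hs) hb; field.
by rewrite hj0.
Qed.

Lemma ge_self (K : fieldType) (v : K -> int) x : ge v (v x) x.
Proof. by right. Qed.

Lemma integralize (K : fieldType) (v : K -> int) p n (x : 'I_n -> K) (M : nat) :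
  is_Qp v p -> (forall i, - v (x i) <= M) ->
  forall N : nat, (M <= N)%N -> forall i, ge v 0 (p%:R ^+ N * x i).
Proof.
move=> H hM N hN i; have [_ hv] := vpow N H.
have hc : ge v N (p%:R ^+ N : K) by right; rewrite hv.
apply: geW (geM H hc (ge_self v (x i))); have := hM i; lia.
Qed.

Lemma rep (K : fieldType) (v : K -> int) p n (a : 'M[K]_n) : prime p -> is_Qp v p ->
  a^T = a -> \det a != 0 ->
  (exists x : 'I_n -> K, (exists i, x i != 0) /\ qform a x = 0) ->
  forall z, exists x y, [/\ forall i, ge v 0 (x i), forall i, ge v 0 (y i),
     qform a y != 0 & qform a x = z * qform a y].
Proof.
move=> pp H hs hdet hiso z.
have h2 := two_nz pp H.
have [x0 hx0] := universal h2 hs hdet hiso z.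
have [y0 hy0] := universal h2 hs hdet hiso 1.
have [M1 hM1] := bound (fun i => - v (x0 i)).
have [M2 hM2] := bound (fun i => - v (y0 i)).
have [cn _] := vpow (M1 + M2) H.
exists (fun i => p%:R ^+ (M1 + M2) * x0 i), (fun i => p%:R ^+ (M1 + M2) * y0 i).
split.
- by apply: (integralize H hM1); rewrite leq_addr.
- by apply: (integralize H hM2); rewrite leq_addl.
- by rewrite qformZ hy0 mulr1 expf_neq0.
- by rewrite !qformZ hx0 hy0; ring.
Qed.

Lemma qclose (K : fieldType) (v : K -> int) p n (a : 'M[K]_n) (MA N : nat) x y :
  is_Qp v p -> (forall i j, ge v (- MA%:Z) (a i j)) ->
  (forall i, ge v 0 (x i)) -> (forall i, ge v N (y i - x i)) ->
  ge v (N%:Z - MA%:Z) (qform a y - qform a x).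
Proof.
move=> H hA hx hxy.
have hy : forall i, ge v 0 (y i).
  move=> i; have -> : y i = x i + (y i - x i) by rewrite addrC subrK.
  by apply: geD H (hx i) _; apply: geW (hxy i); lia.
rewrite /qform -sumrB; apply: (ge_sum (I:=_) H) => i; rewrite -sumrB; apply: (ge_sum H) => j.
have -> : a i j * y i * y j - a i j * x i * x j =
   a i j * ((y i - x i) * y j + x i * (y j - x j)) by ring.
have h1 : ge v N ((y i - x i) * y j) by apply: geW (geM H (hxy i) (hy j)); lia.
have h2 : ge v N (x i * (y j - x j)) by apply: geW (geM H (hx i) (hxy j)); lia.
apply: geW (geM H (hA i j) (geD H h1 h2)); lia.
Qed.

Lemma ge_vclose (K : fieldType) (v : K -> int) k x y : ge v k (x - y) -> vclose v k x y.
Proof.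
have [->|ne] := eqVneq x y; first by left.
case=> [/eqP|h]; first by rewrite subr_eq0 (negbTE ne).
by right.
Qed.

Theorem corollary1 (p : nat) (K : fieldType) (v : K -> int) (n : nat)
    (a : 'M[K]_n) :
  prime p -> is_Qp v p ->
  a^T = a -> a != 0 -> \det a != 0 ->
  (exists x : 'I_n -> K, (exists i, x i != 0) /\ qform a x = 0) ->
  (forall z : K, ratios (qimage a (fun x => forall i, vint v (x i))) z) /\
  dense_v v (ratios (qimage a (fun x => exists m : 'I_n -> int, forall i, x i = (m i)%:~R))).
Proof.
move=> pp H hs _ hdet hiso; split.
  move=> z; have [x [y [hx hy hyn hxy]]] := rep pp H hs hdet hiso z.
  exists (qform a x), (qform a y); split => //.
  - by exists x.
  - by exists y.
  - by rewrite hxy mulfK.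
move=> z k.
have [x [y [hx hy hyn hxy]]] := rep pp H hs hdet hiso z.
have [MA hMA] := bound (fun ij : 'I_n * 'I_n => - v (a ij.1 ij.2)).
have hA : forall i j, ge v (- MA%:Z) (a i j).
  move=> i j; apply: geW (ge_self v (a i j)); have := hMA (i, j); rewrite /=; lia.
have [Z hZ] := bound (fun _ : unit => - v z).
have hz : ge v (- Z%:Z) z by apply: geW (ge_self v z); have := hZ tt; lia.
set s := qform a y in hyn hxy.
pose N := (`|k| + MA + Z + `|v s| + 1)%N.
have [mx hmx] : exists mx : 'I_n -> int, forall i, ge v N (x i - (mx i)%:~R).
  exact: (@fin_all_exists _ (fun _ => int) (fun i m => ge v N (x i - m%:~R)) (fun i => approx N H (hx i))).
have [my hmy] : exists my : 'I_n -> int, forall i, ge v N (y i - (my i)%:~R).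
  exact: (@fin_all_exists _ (fun _ => int) (fun i m => ge v N (y i - m%:~R)) (fun i => approx N H (hy i))).
pose x' := fun i => (mx i)%:~R : K.
pose y' := fun i => (my i)%:~R : K.
have hx' : forall i, ge v N (x' i - x i) by move=> i; rewrite -opprB; apply: geN H (hmx i).
have hy' : forall i, ge v N (y' i - y i) by move=> i; rewrite -opprB; apply: geN H (hmy i).
have hQx := qclose H hA hx hx'.
have hQy := qclose H hA hy hy'.
have [hQyn hQyv] : qform a y' != 0 /\ v (qform a y') = v s.
  by apply: ge_same H hyn _; apply: geW hQy; rewrite /N; lia.
exists (qform a x' / qform a y'); split.
  exists (qform a x'), (qform a y'); split => //.
  - by exists x'; split => //; exists mx.
  - by exists y'; split => //; exists my.
apply: ge_vclose.
have -> : z - qform a x' / qform a y' =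
   - ((qform a x' - qform a x) - z * (qform a y' - s)) / qform a y'.
  by rewrite hxy; field.
have hQx' : ge v (- Z%:Z + (N%:Z - MA%:Z)) (qform a x' - qform a x).
  by apply: geW hQx; lia.
have h3 := geV H hQyn (geN H (geB H hQx' (geM H hz hQy))).
apply: geW h3; rewrite hQyv /N; lia.
Qed.
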